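(* For any myopic equilibrium $\mathbf{s}$ of a $k$-round Funding Game with bundle sizes $m^1,\dots,m^k$ and valuation profile $\mathbf{v}$ (with $\Delta^t>0$ for $t=1,\dots,k$), $$sw(OPT^{\mathbf{v}}) \;\le\; sw(\mathbf{s}) + \Delta^{k+1}\cdot\sum_{t=1}^k\left(m^t - \frac{sw(\mathbf{s}^t)}{\Delta^t}\right).$$
   Context: Players $1,\dots,n$ have valuation functions $v_i:\{0,\dots,m\}\to\mathbb{R}_{\ge0}$ with $v_i(0)=0$, nondecreasing, with diminishing marginal returns $v_i(x)-v_i(x-1)\ge v_i(x+1)-v_i(x)$. A (single-round) Funding Game with $M$ items and such valuations $w_i$: each player submits a request $(x_i,\tilde v_i)$ with $x_i\in\{0,\dots,M\}$ and $0\le \tilde v_i\le w_i(x_i)$; the Highest Ratio Greedy mechanism considers requests in descending order of $\tilde v_i/x_i$ (ties in favor of lower index) and grants each in turn $\min(x_i,\text{items still available})$ items; payoff is $w_i$ of the number of items received; a Nash equilibrium is a request profile where no player can increase its payoff by changing its own valid request. A $k$-round Funding Game with bundle sizes $m^1,\dots,m^k$ (positive integers, $\sum_t m^t=m$) consists of rounds $t=1,\dots,k$; in round $t$ a single-round Funding Game $G^t$ is played with $m^t$ items and marginal valuations $v_i^t(x)=v_i(x+\alpha_i^{t-1})-v_i(\alpha_i^{t-1})$, where $X_i^t$ is the number of items player $i$ receives in round $t$ and $\alpha_i^t=\sum_{j\le t}X_i^j$, $\alpha_i^0=0$. $\mathbf{s}^t$ is the request profile in round $t$ and $\mathbf{s}=(\mathbf{s}^1,\dots,\mathbf{s}^k)$.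 $\mathbf{s}$ is a myopic equilibrium if each $\mathbf{s}^t$ is a Nash equilibrium of $G^t$. $sw(\mathbf{s}^t)=\sum_i v_i^t(X_i^t)$, $sw(\mathbf{s})=\sum_i v_i(\alpha_i^k)$, and $\Delta^t=\max_i v_i^t(1)$ for $t=1,\dots,k+1$ (with $v_i^{k+1}(x)=v_i(x+\alpha_i^k)-v_i(\alpha_i^k)$). $sw(OPT^{\mathbf{v}})$ is the maximum of $\sum_i v_i(X_i)$ over allocations with $\sum_i X_i\le m$. *)

(* Defs.v *)
From HB Require Import structures.
From mathcomp Require Import all_boot all_order all_algebra.
Set Implicit Arguments. Unset Strict Implicit. Unset Printing Implicit Defensive.
Import Order.TTheory GRing.Theory Num.Theory.
Local Open Scope ring_scope.

(* A request is a pair (x_i, tilde v_i). *)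
Definition ratio (R : realFieldType) (q : nat * R) : R := q.2 / q.1%:R.
(* (with x_i = 0 the ratio is 0 by MathComp's convention 0^-1 = 0; such a
   request receives 0 items wherever it is placed, so this is harmless) *)

(* a is processed no later than b: higher ratio first, ties to lower index *)
Definition hrg_le (R : realFieldType) n (s : 'I_n -> nat * R) (a b : 'I_n) : bool :=
  (ratio (s b) < ratio (s a)) || ((ratio (s a) == ratio (s b)) && (a <= b)%N).

Definition hrg_order (R : realFieldType) n (s : 'I_n -> nat * R) : seq 'I_n :=
  sort (hrg_le s) (enum 'I_n).

Fixpoint grant n (x : 'I_n -> nat) (ord : seq 'I_n) (rem : nat) : 'I_n -> nat :=
  match ord with
  | [::] => fun _ => 0%N
  | i :: ord' =>
      let g := minn (x i) rem in
      fun j => if j == i then g else grant x ord' (rem - g) j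
  end.

Definition hrg_alloc (R : realFieldType) n (M : nat) (s : 'I_n -> nat * R) : 'I_n -> nat :=
  grant (fun i => (s i).1) (hrg_order s) M.

Definition valid_request (R : realFieldType) (M : nat) (w : nat -> R) (q : nat * R) : bool :=
  ((q.1 <= M)%N && (0 <= q.2)) && (q.2 <= w q.1).

Definition upd (R : realFieldType) n (s : 'I_n -> nat * R) (i : 'I_n) (q : nat * R) :
  'I_n -> nat * R := fun j => if j == i then q else s j.

Definition nash_eq (R : realFieldType) n (M : nat) (w : 'I_n -> nat -> R)
    (s : 'I_n -> nat * R) : Prop :=
  (forall i, valid_request M (w i) (s i)) /\
  (forall i q, valid_request M (w i) q ->
     w i (hrg_alloc M (upd s i q) i) <= w i (hrg_alloc M s i)).

Definition valuation_profile (R : realFieldType) n (v : 'I_n -> nat -> R) : Prop :=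
  forall i, [/\ v i 0%N = 0,
                (forall x, v i x <= v i x.+1) &
                (forall x, v i x.+2 - v i x.+1 <= v i x.+1 - v i x)].

(* k-round game: rounds t = 1..k, bundle sizes mb t, request profiles S t *)
Definition X (R : realFieldType) n (mb : nat -> nat) (S : nat -> 'I_n -> nat * R)
    (t : nat) : 'I_n -> nat := hrg_alloc (mb t) (S t).

Definition alpha (R : realFieldType) n (mb : nat -> nat) (S : nat -> 'I_n -> nat * R)
    (t : nat) (i : 'I_n) : nat := (\sum_(1 <= u < t.+1) X mb S u i)%N.

Definition marg (R : realFieldType) n (v : 'I_n -> nat -> R) (mb : nat -> nat)
    (S : nat -> 'I_n -> nat * R) (t : nat) (i : 'I_n) (x : nat) : R :=
  v i (x + alpha mb S t.-1 i)%N - v i (alpha mb S t.-1 i).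

Definition myopic_eq (R : realFieldType) n (k : nat) (v : 'I_n -> nat -> R)
    (mb : nat -> nat) (S : nat -> 'I_n -> nat * R) : Prop :=
  forall t, (1 <= t <= k)%N -> nash_eq (mb t) (marg v mb S t) (S t).

Definition sw_round (R : realFieldType) n (v : 'I_n -> nat -> R) (mb : nat -> nat)
    (S : nat -> 'I_n -> nat * R) (t : nat) : R :=
  \sum_(i < n) marg v mb S t i (X mb S t i).

Definition sw_total (R : realFieldType) n (k : nat) (v : 'I_n -> nat -> R)
    (mb : nat -> nat) (S : nat -> 'I_n -> nat * R) : R :=
  \sum_(i < n) v i (alpha mb S k i).

Definition Delta (R : realFieldType) n (v : 'I_n -> nat -> R) (mb : nat -> nat)
    (S : nat -> 'I_n -> nat * R) (t : nat) : R :=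
  \big[Num.max/0]_(i < n) marg v mb S t i 1%N.

Definition swOPT (R : realFieldType) n (m : nat) (v : 'I_n -> nat -> R) : R :=
  \big[Num.max/0]_(A : {ffun 'I_n -> 'I_m.+1} | (\sum_(i < n) A i <= m)%N)
     \sum_(i < n) v i (A i).

(* Main.v *)
Require Import Defs.
From HB Require Import structures.
From mathcomp Require Import all_boot all_order all_algebra.
From mathcomp Require Import lra.
Import Order.TTheory GRing.Theory Num.Theory.
Local Open Scope ring_scope.
Set Implicit Arguments. Unset Strict Implicit.

Lemma vmono (R : realFieldType) (v : nat -> R) :
  (forall x, v x <= v x.+1) -> forall x y, (x <= y)%N -> v x <= v y.
Proof.
move=> h x y /subnKC <-; elim: (y - x)%N => [|d ih]; first by rewrite addn0.
by rewrite addnS; exact: le_trans ih (h _).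
Qed.

Lemma amono (a : nat -> nat) :
  (forall x, (a x <= a x.+1)%N) -> forall x y, (x <= y)%N -> (a x <= a y)%N.
Proof.
move=> h x y /subnKC <-; elim: (y - x)%N => [|d ih]; first by rewrite addn0.
by rewrite addnS; exact: leq_trans ih (h _).
Qed.

Lemma vmarg (R : realFieldType) (v : nat -> R) :
  (forall x, v x.+2 - v x.+1 <= v x.+1 - v x) ->
  forall x y, (x <= y)%N -> v y.+1 - v y <= v x.+1 - v x.
Proof.
move=> h x y /subnKC <-; elim: (y - x)%N => [|d ih]; first by rewrite addn0.
by rewrite addnS; exact: le_trans (h _) ih.
Qed.

Lemma vchord (R : realFieldType) (v : nat -> R) :
  (forall x, v x.+2 - v x.+1 <= v x.+1 - v x) ->
  forall x d, v (x + d)%N - v x <= d%:R * (v x.+1 - v x).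
Proof.
move=> h x; elim=> [|d ih]; first by rewrite addn0 subrr mul0r.
have hm := vmarg h (leq_addr d x); rewrite addnC in hm.
rewrite -addn1 natrD mulrDl mul1r addnA addn1.
have -> : v (x + d).+1 - v x = (v (x + d).+1 - v (x + d)%N) + (v (x + d)%N - v x) by rewrite addrA subrK.
by rewrite addrC lerD // addnC.
Qed.

Lemma playerQ (R : realFieldType) (v : nat -> R) (a : nat -> nat) (D : nat -> R) (u : R) (A : nat) :
  (forall x, v x <= v x.+1) -> (forall x, v x.+2 - v x.+1 <= v x.+1 - v x) ->
  a 0%N = 0%N -> (forall t, (a t <= a t.+1)%N) -> 0 <= u -> v 0%N = 0 ->
  forall k, (forall t, (1 <= t <= k)%N -> [/\ 0 < D t, u <= D t & v (a t.-1).+1 - v (a t.-1) <= D t]) ->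
  v (minn A (a k)) <= \sum_(1 <= t < k.+1) (v (a t) - v (a t.-1)) * (1 - u / D t) + u * (minn A (a k))%:R.
Proof.
move=> hm hc a0 ha hu v0; elim=> [|k ih] hD.
  by rewrite big_geq // a0 minn0 v0 mulr0 addr0.
have ih' : v (minn A (a k)) <= \sum_(1 <= t < k.+1) (v (a t) - v (a t.-1)) * (1 - u / D t) + u * (minn A (a k))%:R.
  apply: ih => t /andP[t1 t2]; apply: hD; rewrite t1 /=; exact: leq_trans t2 (leqnSn k).
have [D0 uD gD] := hD k.+1 (leqnn _).
rewrite /= in gD.
rewrite big_nat_recr //=.
set S := \sum_(1 <= i < k.+1) _ in ih' *.
have l1 : 0 <= 1 - u / D k.+1 by rewrite subr_ge0 ler_pdivrMr // mul1r.
have c0 : 0 <= v (a k.+1) - v (a k) by rewrite subr_ge0 vmono.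
case: (leqP A (a k)) => hA.
  have e1 : minn A (a k) = A by apply/minn_idPl.
  have e2 : minn A (a k.+1) = A by apply/minn_idPl; exact: leq_trans hA (ha k).
  rewrite e1 in ih'; rewrite e2.
  have := mulr_ge0 c0 l1; lra.
have e1 : minn A (a k) = a k by apply/minn_idPr; exact: ltnW.
rewrite e1 in ih'.
set B := minn A (a k.+1).
have hB1 : (a k <= B)%N by rewrite leq_min (ltnW hA) ha.
have hB2 : (B <= a k.+1)%N by rewrite geq_minr.
have eB : B = (a k + (B - a k))%N by rewrite subnKC.
set d := (B - a k)%N in eB.
rewrite eB natrD.
set x := v (a k + d)%N - v (a k).
have x1 : x <= v (a k.+1) - v (a k) by rewrite lerD2r vmono // -eB.
have x2 : x <= d%:R * D k.+1.
  apply: le_trans (vchord hc (a k) d) _; rewrite ler_wpM2l //.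
set l := u / D k.+1.
have lD : l * D k.+1 = u by rewrite /l divfK // gt_eqF.
have l0 : 0 <= l by rewrite /l divr_ge0 // ltW.
have h1 : (1 - l) * x <= (1 - l) * (v (a k.+1) - v (a k)) by rewrite ler_wpM2l.
have h2 : l * x <= l * (d%:R * D k.+1) by rewrite ler_wpM2l.
have h3 : l * (d%:R * D k.+1) = u * d%:R by rewrite mulrCA lD mulrC.
have h4 : (1 - l) * (v (a k.+1) - v (a k)) = (v (a k.+1) - v (a k)) * (1 - l) by rewrite mulrC.
have h5 : (1 - l) * x + l * x = x by rewrite mulrBl mul1r subrK.
rewrite mulrDr.
rewrite /x in h1 h2 h5.
lra.
Qed.
Lemma player (R : realFieldType) (v : nat -> R) (a : nat -> nat) (D : nat -> R) (u : R) (k A : nat) :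
  (forall x, v x <= v x.+1) -> (forall x, v x.+2 - v x.+1 <= v x.+1 - v x) ->
  a 0%N = 0%N -> (forall t, (a t <= a t.+1)%N) -> 0 <= u -> v 0%N = 0 ->
  (forall t, (1 <= t <= k)%N -> [/\ 0 < D t, u <= D t & v (a t.-1).+1 - v (a t.-1) <= D t]) ->
  v (a k).+1 - v (a k) <= u ->
  v A <= \sum_(1 <= t < k.+1) (v (a t) - v (a t.-1)) * (1 - u / D t) + u * A%:R.
Proof.
move=> hm hc a0 ha hu v0 hD hk.
have Q := playerQ A hm hc a0 ha hu v0 hD.
case: (leqP A (a k)) => hA.
  by move: Q; rewrite (minn_idPl hA).
rewrite (minn_idPr (ltnW hA)) in Q.
have eA : A = (a k + (A - a k))%N by rewrite subnKC // ltnW.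
set d := (A - a k)%N in eA.
rewrite eA natrD.
have x2 : v (a k + d)%N - v (a k) <= d%:R * u.
  apply: le_trans (vchord hc (a k) d) _; rewrite ler_wpM2l //.
have : d%:R * u = u * d%:R by rewrite mulrC.
lra.
Qed.

Unset Implicit Arguments. Set Strict Implicit.
Theorem lemma2 (R : realFieldType) (n k m : nat) (v : 'I_n -> nat -> R)
    (mb : nat -> nat) (S : nat -> 'I_n -> nat * R) :
  valuation_profile v ->
  (forall t, (1 <= t <= k)%N -> (0 < mb t)%N) ->
  (\sum_(1 <= t < k.+1) mb t)%N = m ->
  myopic_eq k v mb S ->
  (forall t, (1 <= t <= k)%N -> 0 < Delta v mb S t) ->
  swOPT m v <=
    sw_total k v mb S
    + Delta v mb S k.+1 *
        \sum_(1 <= t < k.+1) ((mb t)%:R - sw_round v mb S t / Delta v mb S t).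
Proof.
move=> hv _ hm _ hD.
set u := Delta v mb S k.+1.
have a0 i : alpha mb S 0 i = 0%N by rewrite /alpha big_geq.
have aS i t : alpha mb S t.+1 i = (alpha mb S t i + X mb S t.+1 i)%N.
  by rewrite /alpha big_nat_recr.
have amon i t : (alpha mb S t i <= alpha mb S t.+1 i)%N by rewrite aS leq_addr.
have Dge i t : marg v mb S t i 1 <= Delta v mb S t by exact: le_bigmax.
have Delta0 t : 0 <= Delta v mb S t.
  rewrite /Delta; elim/big_ind: _ => //.
    by move=> x y hx hy; rewrite le_max hx.
  move=> i _; rewrite /marg subr_ge0 add1n.
  by have [_ hm1 _] := hv i; exact: hm1.
have hu0 : 0 <= u by exact: Delta0.
have uD t : (1 <= t <= k)%N -> u <= Delta v mb S t.
  move=> /andP[t1 t2]; apply: bigmax_le => [|i _]; first exact: Delta0.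
  apply: le_trans (Dge i t); rewrite /marg !add1n /=.
  have [_ _ hc] := hv i; apply: vmarg => //.
  by apply: (amono (amon i)); rewrite (leq_trans (leq_pred t)).
have key : forall A : 'I_n -> nat, (\sum_(i < n) A i <= m)%N ->
    \sum_(i < n) v i (A i) <= sw_total k v mb S
    + u * \sum_(1 <= t < k.+1) ((mb t)%:R - sw_round v mb S t / Delta v mb S t).
  move=> A hA.
  have hpl : forall i, v i (A i) <=
     \sum_(1 <= t < k.+1) (v i (alpha mb S t i) - v i (alpha mb S t.-1 i)) * (1 - u / Delta v mb S t)
     + u * (A i)%:R.
    move=> i; have [v0 hm1 hc] := hv i.
    apply: player => //.
      move=> t ht; split; [exact: hD | exact: uD |].
      by have := Dge i t; rewrite /marg add1n.
    by have := Dge i k.+1; rewrite /marg add1n.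
  apply: le_trans (ler_sum _ (fun i _ => hpl i)) _.
  rewrite big_split /= -mulr_sumr -natr_sum.
  rewrite exchange_big /=.
  under eq_bigr do rewrite -mulr_suml.
  have esw : sw_total k v mb S = \sum_(1 <= t < k.+1) \sum_(i < n) (v i (alpha mb S t i) - v i (alpha mb S t.-1 i)).
    rewrite exchange_big /= /sw_total; apply: eq_bigr => i _.
    rewrite big_add1 /= telescope_sumr // a0.
    by have [-> _ _] := hv i; rewrite subr0.
  have esr : \sum_(1 <= t < k.+1) ((mb t)%:R - sw_round v mb S t / Delta v mb S t) =
     \sum_(1 <= t < k.+1) ((mb t)%:R - (\sum_(i < n) (v i (alpha mb S t i) - v i (alpha mb S t.-1 i))) / Delta v mb S t).
    apply: eq_big_nat => t /andP[t1 _]; congr (_ - _ / _).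
    rewrite /sw_round /marg; apply: eq_bigr => i _.
    by case: t t1 => // t _; rewrite aS addnC.
  rewrite esw esr.
  set W := fun t => \sum_(i < n) (v i (alpha mb S t i) - v i (alpha mb S t.-1 i)).
  rewrite -/(W _).
  have e1 : \sum_(1 <= t < k.+1) W t * (1 - u / Delta v mb S t) =
     \sum_(1 <= t < k.+1) W t - u * \sum_(1 <= t < k.+1) (W t / Delta v mb S t).
    rewrite mulr_sumr -sumrB; apply: eq_bigr => t _.
    by rewrite mulrBr mulr1 mulrCA.
  have e2 : \sum_(1 <= t < k.+1) ((mb t)%:R - W t / Delta v mb S t) =
     m%:R - \sum_(1 <= t < k.+1) (W t / Delta v mb S t).
    by rewrite sumrB -natr_sum hm.
  rewrite e1 e2.
  have : u * (\sum_(i < n) A i)%:R <= u * m%:R by rewrite ler_wpM2l // ler_nat.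
  rewrite mulrBr; lra.
apply: bigmax_le => [|A hA].
  have hz : (\sum_(i < n) (fun _ : 'I_n => 0%N) i <= m)%N by rewrite big1_eq.
  have h0 := key (fun _ => 0%N) hz.
  apply: le_trans h0; rewrite big1 // => i _; by have [-> _ _] := hv i.
apply: le_trans (key (fun i => nat_of_ord (A i)) hA).
by [].
Qed.
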